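(* Let $(b,c)$ be a locally finite, connected graph over a countable set $X$, and let $G$ be a nilpotent group acting cocompactly on $X$ such that $H_{b,c}$ is $G$-invariant. Fix $x_0\in X$, let $\mathcal{K}$ be the closure in $C(X)$ of $\{f\in\mathcal{H}^+ : f(x_0)=1\}$ and let $\mathcal{M}=\{f\in\mathcal{K}: f \text{ is multiplicative}\}$. Then $\mathcal{M}=\mathrm{ex}\,\mathcal{K}$, the set of extreme points of $\mathcal{K}$.
   Context: $X$ is a countable set. A graph over $X$ is a pair $(b,c)$ with $b:X\times X\to[0,\infty)$ and $c:X\to\mathbb{R}$ such that $\sum_{y}b(x,y)<\infty$ for all $x$ ($b$ need not be symmetric). It is locally finite if each $x$ has only finitely many $y$ with $b(x,y)>0$, and connected if for all $x,z\in X$ there is a finite sequence $x=y_1,\dots,y_n=z$ with $b(y_i,y_{i+1})>0$. $C(X)$ is the space of real functions on $X$ with the product topology. $\mathrm{Dom}(H)=\{f:\sum_y b(x,y)|f(y)|<\infty\ \forall x\}$, $H_{b,c}f(x)=\sum_y b(x,y)(f(x)-f(y))+c(x)f(x)$; $f$ is harmonic if $Hf=0$, and $\mathcal{H}^+$ is the set of nonnegative, nonzero harmonic functions. For $G$ acting on $X$, $T_gf(x)=f(g^{-1}x)$; the action is cocompact if $GV=X$ for some finite $V$; $H$ is $G$-invariant if $T_g(\mathrm{Dom}(H))\subseteq\mathrm{Dom}(H)$ and $HT_g=T_gH$ for all $g\in G$. $f$ is multiplicative if there is a homomorphism $\gamma:G\to(0,\infty)$ with $T_gf=\gamma(g^{-1})f$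 for all $g\in G$. *)

(* Defs.v *)
From HB Require Import structures.
From mathcomp Require Import all_boot all_order all_algebra.
From mathcomp Require Import all_classical all_reals all_analysis.
From mathcomp Require Import monoid.
Set Implicit Arguments. Unset Strict Implicit. Unset Printing Implicit Defensive.
Import Order.TTheory GRing.Theory Num.Theory numFieldNormedType.Exports.
Local Open Scope classical_set_scope.
Local Open Scope ring_scope.

Section Nilpotent.
Variable G : groupType.

Definition is_subgroup (S : set G) : Prop :=
  S 1%g /\ (forall a b, S a -> S b -> S (a * b)%g) /\ (forall a, S a -> S (a^-1)%g).

Definition gen_subgroup (S : set G) : set G :=
  \bigcap_(H in [set H : set G | is_subgroup H /\ S `<=` H]) H.

Fixpoint lcs (n : nat) : set G :=
  match n with
  | 0 => setT
  | n'.+1 => gen_subgroup [set x : G | exists a b, lcs n' a /\ x = commg a b]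
  end.

Definition nilpotent_group : Prop := exists n, lcs n = [set 1%g].
End Nilpotent.

Section Graph.
Variables (R : realType) (X : countType).

(* sum of a real function over X, meaningful for absolutely summable g *)
Definition sumX (g : X -> R) : R :=
  fine (\esum_(y in [set: X]) (Num.max (g y) 0)%:E)
  - fine (\esum_(y in [set: X]) (Num.max (- g y) 0)%:E).

Definition is_graph (b : X -> X -> R) (c : X -> R) : Prop :=
  (forall x y, 0 <= b x y) /\
  (forall x, (\esum_(y in [set: X]) (b x y)%:E < +oo)%E).

Definition locally_finite (b : X -> X -> R) : Prop :=
  forall x, finite_set [set y | 0 < b x y].

Definition graph_connected (b : X -> X -> R) : Prop :=
  forall x z : X, exists s : seq X,
    path (fun u v => 0 < b u v) x s /\ last x s = z.

Definition DomH (b : X -> X -> R) : set (X -> R) :=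
  [set f | forall x, (\esum_(y in [set: X]) (b x y * `|f y|)%:E < +oo)%E].

Definition Hop (b : X -> X -> R) (c : X -> R) (f : X -> R) : X -> R :=
  fun x => sumX (fun y => b x y * (f x - f y)) + c x * f x.

Definition harmonic b c (f : X -> R) : Prop := DomH b f /\ Hop b c f = (fun=> 0).

Definition Hplus b c : set (X -> R) :=
  [set f | harmonic b c f /\ (forall x, 0 <= f x) /\ f <> (fun=> 0)].

Variable G : groupType.

Definition is_action (act : G -> X -> X) : Prop :=
  (forall x, act 1%g x = x) /\ (forall g h x, act (g * h)%g x = act g (act h x)).

Definition Tg (act : G -> X -> X) (g : G) (f : X -> R) : X -> R :=
  fun x => f (act (g^-1)%g x).

Definition cocompact (act : G -> X -> X) : Prop :=
  exists V : seq X, forall x, exists g v, v \in V /\ x = act g v.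

Definition G_invariant (act : G -> X -> X) b c : Prop :=
  forall g, (forall f, DomH b f -> DomH b (Tg act g f)) /\
            (forall f, DomH b f -> Hop b c (Tg act g f) = Tg act g (Hop b c f)).

Definition multiplicative (act : G -> X -> X) (f : X -> R) : Prop :=
  exists gamma : G -> R,
    (forall g, 0 < gamma g) /\
    (forall g h, gamma (g * h)%g = gamma g * gamma h) /\
    (forall g, Tg act g f = (fun x => gamma (g^-1)%g * f x)).

End Graph.

(* K = closure in C(X) (product topology) of {f in H^+ : f x0 = 1} *)
Definition Kset (R : realType) (X : countType) b c (x0 : X) : set (X -> R) :=
  closure [set f : {ptws X -> R} | Hplus b c f /\ f x0 = 1].

Definition extreme_points (R : realType) (X : Type) (K : set (X -> R)) : set (X -> R) :=
  [set f | K f /\ forall g h (t : R), K g -> K h -> 0 < t < 1 ->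
             f = (fun x => t * g x + (1 - t) * h x) -> g = h].

(* Main.v *)
From Pilot Require Import Defs.
From HB Require Import structures.
From mathcomp Require Import all_boot all_order all_algebra.
From mathcomp Require Import all_classical all_reals all_analysis.
From mathcomp Require Import monoid finmap ring lra zify.
Set Implicit Arguments. Unset Strict Implicit. Unset Printing Implicit Defensive.
Import Order.TTheory GRing.Theory Num.Theory numFieldNormedType.Exports.
Local Open Scope classical_set_scope.
Local Open Scope ring_scope.

Lemma growth_contra (R : realType) (s K : R) :
  1 < s -> (forall n, s ^+ (n * n) <= K ^+ n) -> False.
Proof.
move=> s1 H.
have bern n : 1 + n%:R * (s - 1) <= s ^+ n.
  elim: n => [|n IH]; first by rewrite mul0r addr0 expr0.
  rewrite exprS -natr1.
  have h0 : 0 <= n%:R :> R by [].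
  have a1 : s * (1 + n%:R * (s - 1)) <= s * s ^+ n by rewrite ler_wpM2l //; lra.
  have a2 : 0 <= n%:R * (s - 1) * (s - 1) by rewrite !mulr_ge0 //; lra.
  nra.
have K0 : s <= K by have := H 1%N; rewrite !expr1.
have Hn n : (0 < n)%N -> s ^+ n <= K.
  move=> n0; have := H n; rewrite exprM ler_pXn2r // ?nnegrE ?exprn_ge0 //; lra.
pose n := (Num.truncn (K / (s - 1))).+1.
have hn : K / (s - 1) < n%:R by exact: truncnS_gt.
have : K < n%:R * (s - 1) by rewrite -ltr_pdivrMr ?subr_gt0.
have := bern n; have := Hn n isT; lra.
Qed.

Section Grp.
Variable G : groupType.
Local Open Scope group_scope.

Lemma sub_gen (S : set G) : S `<=` gen_subgroup S.
Proof. by move=> x Sx H [_ SH]; exact: SH. Qed.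

Lemma gen_min (S H : set G) : is_subgroup H -> S `<=` H -> gen_subgroup S `<=` H.
Proof. by move=> sH SH x; apply; split. Qed.

Lemma gen_subgroupP (S : set G) : is_subgroup (gen_subgroup S).
Proof.
split; [|split].
- by move=> H [[h1 _] _].
- by move=> a b2 ha hb H hH; have [_ [hm _]] := hH.1; apply: hm; [exact: ha|exact: hb].
- by move=> a ha H hH; have [_ [_ hi]] := hH.1; apply: hi; exact: ha.
Qed.

Lemma lcs_sub k : is_subgroup (@lcs G k).
Proof.
case: k => [|k] /=; last exact: gen_subgroupP.
by split => //.
Qed.

Lemma lcs_comm k a e : @lcs G k a -> @lcs G k.+1 (commg a e).
Proof. by move=> ha /=; apply: sub_gen; exists a, e. Qed.

Lemma sub1 (H : set G) : is_subgroup H -> H 1.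
Proof. by case. Qed.
Lemma subM (H : set G) x y : is_subgroup H -> H x -> H y -> H (x * y).
Proof. by move=> [_ [h _]]; exact: h. Qed.
Lemma subV (H : set G) x : is_subgroup H -> H x -> H x^-1.
Proof. by move=> [_ [_ h]]; exact: h. Qed.
Lemma subX (H : set G) x n : is_subgroup H -> H x -> H (x ^+ n).
Proof.
move=> sH hx; elim: n => [|n IH]; first exact: sub1.
by rewrite expgS; exact: subM.
Qed.

Lemma commMl (x1 x2 y : G) : commg (x1 * x2) y = conjg (commg x1 y) x2 * commg x2 y.
Proof.
rewrite /commg /conjg !invgM !mulgA.
rewrite -[x2^-1 * x1^-1 * y^-1 * x1 * y * x2 * x2^-1]mulgA mulgV mulg1.
by rewrite -[_ * y * y^-1]mulgA mulgV mulg1.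
Qed.

Lemma commMr (x y1 y2 : G) : commg x (y1 * y2) = commg x y2 * conjg (commg x y1) y2.
Proof.
rewrite /commg /conjg !invgM !mulgA.
rewrite -[x^-1 * y2^-1 * x * y2 * y2^-1]mulgA mulgV mulg1.
by rewrite -[x^-1 * y2^-1 * x * x^-1]mulgA mulgV mulg1.
Qed.

Lemma conj_comm (m g : G) : conjg m g = m * commg m g.
Proof. by rewrite /commg mulgA mulgV mul1g. Qed.

End Grp.

Section Fin.
Variables (R : realType) (X : countType).

Lemma esum_fin (S : {fset X}) (a : X -> R) :
  (forall y, 0 <= a y) -> (forall y, y \notin S -> a y = 0) ->
  (\esum_(y in [set: X]) (a y)%:E = (\sum_(y <- S) a y)%:E)%E.
Proof.
move=> a0 aS.
rewrite (_ : (\esum_(y in [set: X]) (a y)%:E = \esum_(y in [set` S]) (a y)%:E)%E).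
  rewrite esum_fset //; last by move=> i _; rewrite lee_fin.
  rewrite fsbig_finite //= set_fsetK sumEFin //.
rewrite [RHS]esum_mkcond; apply: eq_esum => y _.
case: ifPn => // H; rewrite aS //; apply: contra H => yS; exact: mem_set.
Qed.

Lemma sumX_fin (S : {fset X}) (F : X -> R) :
  (forall y, y \notin S -> F y = 0) -> sumX F = \sum_(y <- S) F y.
Proof.
move=> FS; rewrite /sumX.
rewrite (@esum_fin S (fun y => Num.max (F y) 0)); last 2 first.
- by move=> y; rewrite le_max lexx orbT.
- by move=> y /FS ->; rewrite maxxx.
rewrite (@esum_fin S (fun y => Num.max (- F y) 0)); last 2 first.
- by move=> y; rewrite le_max lexx orbT.
- by move=> y /FS ->; rewrite oppr0 maxxx.
rewrite /= -sumrB; apply: eq_bigr => y _.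
case: (lerP 0 (F y)) => h.
- by rewrite max_r ?subr0 // oppr_le0.
- by rewrite max_l ?sub0r ?opprK // oppr_ge0 ltW.
Qed.

Variables (b : X -> X -> R) (c : X -> R).
Hypothesis hg : is_graph b c.
Hypothesis hlf : locally_finite b.

Definition L x : {fset X} := fset_set [set y | 0 < b x y].

Lemma b_ge0 x y : 0 <= b x y. Proof. by case: hg. Qed.

Lemma notL x y : y \notin L x -> b x y = 0.
Proof.
rewrite /L in_fset_set; last exact: hlf.
move=> h; apply/eqP; rewrite eq_le b_ge0 andbT leNgt; apply: contra h => h.
exact: mem_set.
Qed.

Lemma inL x y : 0 < b x y -> y \in L x.
Proof. by move=> h; rewrite /L in_fset_set; [exact: mem_set | exact: hlf]. Qed.

Lemma sumXb x (F : X -> R) :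
  sumX (fun y => b x y * F y) = \sum_(y <- L x) b x y * F y.
Proof. by apply: sumX_fin => y /notL ->; rewrite mul0r. Qed.

Lemma DomH_all f : DomH b f.
Proof.
move=> x; rewrite (@esum_fin (L x) (fun y => b x y * `|f y|)) ?ltry //.
- by move=> y; rewrite mulr_ge0 // b_ge0.
- by move=> y /notL ->; rewrite mul0r.
Qed.

Definition D x := \sum_(y <- L x) b x y + c x.

Definition hm (f : X -> R) := forall x, \sum_(y <- L x) b x y * f y = D x * f x.

Lemma harmonicE f : Defs.harmonic b c f <-> hm f.
Proof.
have E x : Hop b c f x = D x * f x - \sum_(y <- L x) b x y * f y.
  rewrite /Hop sumXb /D mulrDl big_distrl /=.
  rewrite addrAC; congr (_ + _).
  by rewrite -sumrB; apply: eq_bigr => y _; rewrite mulrBr.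
split.
- move=> [_ H] x; have := congr1 (fun F => F x) H => /=.
  by rewrite E => /eqP; rewrite subr_eq0 => /eqP ->.
- move=> H; split; first exact: DomH_all.
  by apply: funext => x; rewrite E H subrr.
Qed.

Lemma hm_lin f g a e : hm f -> hm g -> hm (fun y => a * f y + e * g y).
Proof.
move=> hf hgg x.
transitivity (a * \sum_(y <- L x) b x y * f y + e * \sum_(y <- L x) b x y * g y).
  by rewrite !mulr_sumr -big_split; apply: eq_bigr => y _ /=; ring.
by rewrite hf hgg; ring.
Qed.

Lemma hm_scale f a : hm f -> hm (fun y => a * f y).
Proof.
move=> hf; have := hm_lin a 0 hf hf; congr hm; apply: funext => y; ring.
Qed.

Lemma hm_sub f g : hm f -> hm g -> hm (fun y => f y - g y).
Proof.
move=> hf hgg; have := hm_lin 1 (-1) hf hgg; congr hm; apply: funext => y; ring.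
Qed.

Lemma hm_cst0 : hm (fun _ => 0).
Proof. by move=> x; rewrite mulr0 big1 // => y _; rewrite mulr0. Qed.

Definition posh f := hm f /\ forall y, 0 <= f y.
Definition HK x y C := forall f, posh f -> f y <= C * f x.

Lemma HK_edge x y : 0 < b x y -> exists C, 0 < C /\ HK x y C.
Proof.
move=> bxy; exists (`|D x / b x y| + 1); split.
  by rewrite ltr_pwDr // normr_ge0.
move=> f [hf f0].
have h1 : b x y * f y <= D x * f x.
  rewrite -hf (bigD1_seq y) /=; [|exact: inL | exact: fset_uniq].
  rewrite lerDl sumr_ge0 // => z _; by rewrite mulr_ge0 ?b_ge0.
have h2 : f y <= D x / b x y * f x.
  by rewrite mulrAC ler_pdivlMr // mulrC.
apply: (le_trans h2); rewrite ler_wpM2r //.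
by rewrite (le_trans (ler_norm _)) // lerDl.
Qed.

Lemma HK_refl x : HK x x 1.
Proof. by move=> f _; rewrite mul1r. Qed.

Lemma HK_trans x y z C1 C2 : 0 <= C2 -> HK x y C1 -> HK y z C2 -> HK x z (C2 * C1).
Proof.
move=> C20 h1 h2 f pf; apply: (le_trans (h2 f pf)).
by rewrite -mulrA ler_wpM2l // h1.
Qed.

Hypothesis hconn : graph_connected b.

Lemma HK_conn x z : exists C, 0 < C /\ HK x z C.
Proof.
have [s [hp hl]] := hconn x z.
elim: s x hp hl => [|y s IH] x /=.
  by move=> _ <-; exists 1; split => //; exact: HK_refl.
move=> /andP [bxy hp] hl.
have [C1 [C10 h1]] := HK_edge bxy.
have [C2 [C20 h2]] := IH y hp hl.
exists (C2 * C1); split; first exact: mulr_gt0.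
exact: HK_trans (ltW C20) h1 h2.
Qed.

Lemma posh_pos f x0 : posh f -> f x0 = 1 -> forall y, 0 < f y.
Proof.
move=> pf f1 y; have [C [C0 h]] := HK_conn y x0.
have := h f pf; rewrite f1 => h1.
have : 0 < C * f y by apply: lt_le_trans h1.
by rewrite pmulr_rgt0.
Qed.

Variables (G : groupType) (act : G -> X -> X).
Hypothesis hact : is_action act.
Hypothesis hinv : G_invariant act b c.

Lemma hm_act f h : hm f -> hm (fun y => f (act h y)).
Proof.
move=> /harmonicE [hd hf]; apply/harmonicE.
have [h1 h2] := hinv (h^-1)%g.
have -> : (fun y => f (act h y)) = Tg act (h^-1)%g f.
  by apply: funext => y; rewrite /Tg invgK.
split; first exact: h1.
by rewrite h2 // hf.
Qed.

Lemma posh_act f h : posh f -> posh (fun y => f (act h y)).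
Proof. by move=> [hf f0]; split => [|y //]; exact: hm_act. Qed.

Lemma HK_act x y C h : HK x y C -> HK (act h x) (act h y) C.
Proof. by move=> H f pf; exact: (H _ (posh_act h pf)). Qed.


Definition Nset x0 := [set f : X -> R | posh f /\ f x0 = 1].

Lemma cont_sum (s : seq X) (F : X -> {ptws X -> R} -> R) :
  (forall y, continuous (F y)) -> continuous (fun f => \sum_(y <- s) F y f).
Proof.
move=> hF; elim: s => [|y s IH].
  have -> : (fun f => \sum_(y <- [::]) F y f) = fun _ => 0.
    by apply: funext => f; rewrite big_nil.
  exact: cst_continuous.
have -> : (fun f => \sum_(z <- y :: s) F z f) = fun f => F y f + \sum_(z <- s) F z f.
  by apply: funext => f; rewrite big_cons.
by move=> f; apply: continuousD; [exact: hF | exact: IH].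
Qed.

Lemma contB (F1 F2 : {ptws X -> R} -> R) :
  continuous F1 -> continuous F2 -> continuous (fun f => F1 f - F2 f).
Proof. by move=> h1 h2 f; exact: (continuousB (h1 f) (h2 f)). Qed.

Lemma contcM (a : R) (F1 : {ptws X -> R} -> R) :
  continuous F1 -> continuous (fun f => a * F1 f).
Proof. by move=> h1 f; exact: (continuousM (@cst_continuous _ _ a f) (h1 f)). Qed.

Lemma proj_cont y : continuous (fun f : {ptws X -> R} => f y).
Proof. exact: (@proj_continuous X (fun _ => R) y). Qed.

Lemma Nset_closed x0 : closed (Nset x0 : set {ptws X -> R}).
Proof.
have -> : (Nset x0 : set {ptws X -> R}) =
  \bigcap_(x in [set: X])
    (((fun f : {ptws X -> R} => \sum_(y <- L x) b x y * f y - D x * f x) @^-1` [set r | r = 0])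
     `&` ((fun f : {ptws X -> R} => f x) @^-1` [set r | 0 <= r]))
  `&` ((fun f : {ptws X -> R} => f x0) @^-1` [set r | r = 1]).
  apply/seteqP; split.
  - move=> f [[hf f0] f1]; split => // x _; split => /=; last exact: f0.
    by rewrite hf subrr.
  - move=> f [H f1]; split => //; split => [x|x]; have [/= h1 h2] := H x I.
    + by apply/eqP; rewrite -subr_eq0; apply/eqP.
    + exact: h2.
apply: closedI; last by apply: preimage_closed; [move=> f _; exact: proj_cont | exact: closed_eq].
apply: closed_bigI => x _; apply: closedI.
- apply: preimage_closed; last exact: closed_eq.
  move=> f _; apply: contB.
  + by apply: (@cont_sum (L x) (fun y (f : {ptws X -> R}) => b x y * f y)) => y; apply: contcM; exact: proj_cont.
  + by apply: contcM; exact: proj_cont.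
- by apply: preimage_closed; [move=> f _; exact: proj_cont | exact: closed_ge].
Qed.

Lemma Kset_eq x0 : Kset b c x0 = Nset x0.
Proof.
apply/seteqP; split.
- move=> f hf; have H := @Nset_closed x0; apply: H; apply: (closureS _ hf).
  move=> g [[/harmonicE hh [g0 _]] g1]; by split.
- move=> f hf; apply: subset_closure; case: hf => [[hf f0] f1]; split => //.
  split; first exact/harmonicE.
  split => // H; have := congr1 (fun F => F x0) H => /=; rewrite f1 => /eqP.
  by rewrite oner_eq0.
Qed.

Lemma fin_max (T : eqType) (V : seq T) (P : T -> R -> Prop) :
  (forall v C C', P v C -> C <= C' -> P v C') ->
  (forall v, v \in V -> exists C, 0 < C /\ P v C) ->
  exists C, 0 < C /\ forall v, v \in V -> P v C.
Proof.
move=> mono; elim: V => [|v V IH] H; first by exists 1.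
have [C1 [C10 h1]] := H v (mem_head _ _).
have [C2 [C20 h2]] : exists C, 0 < C /\ forall v, v \in V -> P v C.
  by apply: IH => w wV; apply: H; rewrite in_cons wV orbT.
exists (C1 + C2); split; first exact: addr_gt0.
move=> w; rewrite in_cons => /orP [/eqP -> | wV].
- by apply: mono h1 _; rewrite lerDl ltW.
- by apply: mono (h2 _ wV) _; rewrite lerDr ltW.
Qed.

Lemma HK_mono x y C C' : HK x y C -> C <= C' -> HK x y C'.
Proof.
move=> h CC; rewrite /HK => f pf; apply: (le_trans (h f pf)); rewrite ler_wpM2r //.
by case: pf.
Qed.

Lemma act_mul g h x : act (g * h)%g x = act g (act h x).
Proof. by case: hact => _; apply. Qed.

Lemma act1 x : act 1%g x = x.
Proof. by case: hact => h _; exact: h. Qed.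

Lemma zero_prop x0 h : posh h -> h x0 = 0 -> forall y, h y = 0.
Proof.
move=> ph h0 y; have [C [C0 H]] := HK_conn x0 y.
have := H h ph; rewrite h0 mulr0 => hle.
by apply/eqP; rewrite eq_le hle; case: ph => _ ->.
Qed.

Lemma act_commV (z h : G) y :
  act (z * h)%g y = act (commg (z^-1) (h^-1))%g (act h (act z y)).
Proof. by rewrite -!act_mul -mulgA -commgCV. Qed.

Hypothesis hcoc : cocompact act.

Section ExtMult.
Variables (x0 : X) (f : X -> R).
Hypothesis pf : posh f.
Hypothesis f1 : f x0 = 1.
Hypothesis hext : forall g h (t : R), Nset x0 g -> Nset x0 h -> 0 < t < 1 ->
             f = (fun x => t * g x + (1 - t) * h x) -> g = h.

Lemma fpos y : 0 < f y. Proof. exact: posh_pos pf f1 y. Qed.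

Lemma ext_min g : posh g -> (forall y, g y <= f y) -> forall y, g y = g x0 * f y.
Proof.
move=> pg gf.
have [g0 gn] := pg.
have t1 : g x0 <= 1 by rewrite -f1.
have pfg : posh (fun y => f y - g y).
  by split; [apply: hm_sub; [case: pf|case: pg] | move=> y; rewrite subr_ge0].
have [t0 | tn0] := eqVneq (g x0) 0.
  by move=> y; rewrite (zero_prop pg t0) t0 mul0r.
have [tone | tn1] := eqVneq (g x0) 1.
  have h0 : (fun y => f y - g y) x0 = 0 by rewrite /= f1 tone subrr.
  move=> y; have := zero_prop pfg h0 y => /= /eqP; rewrite subr_eq0 => /eqP ->.
  by rewrite tone mul1r.
have tpos : 0 < g x0 by rewrite lt_neqAle eq_sym tn0 gn.
have tlt : g x0 < 1 by rewrite lt_neqAle tn1 t1.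
set t := g x0 in tpos tlt tn0 tn1 *.
have t1n0 : 1 - t != 0 by rewrite subr_eq0 eq_sym.
have E : (fun y => t^-1 * g y) = (fun y => (1 - t)^-1 * (f y - g y)).
  apply: (hext (t := t)).
- split; first by split; [apply: hm_scale; case: pg | move=> y; rewrite mulr_ge0 // invr_ge0 ltW].
  by rewrite /= mulVf.
- split; first by split; [apply: hm_scale; case: pfg | move=> y; rewrite mulr_ge0 // ?invr_ge0 ?subr_ge0 // ltW // subr_gt0].
  by rewrite /= f1 -/t mulVf.
- by rewrite tpos tlt.
- apply: funext => y; rewrite !mulrA mulfV // mulfV //; ring.
move=> y; have := congr1 (fun F => F y) E => /= E2.
  have e1 : g y = t * (t^-1 * g y) by rewrite mulrA mulfV ?mul1r.
  have e2 : f y - g y = (1 - t) * ((1 - t)^-1 * (f y - g y)) by rewrite mulrA mulfV ?mul1r.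
  rewrite E2 in e1; move: e1 e2; rewrite -/t.
  set B := (1 - t)^-1 * (f y - g y) => e1 e2.
  have fB : f y = B by nra.
  by rewrite e1 fB.
Qed.

Definition gam z := f (act z x0).
Definition Triv (S : set G) := forall z, S z -> forall y, f (act z y) = f y.
Definition Mult (S : set G) := forall z, S z -> forall y, f (act z y) = gam z * f y.

Lemma gam1 : gam 1%g = 1.
Proof. by rewrite /gam act1. Qed.

Lemma mult_of_bound z C : 0 < C -> (forall y, f (act z y) <= C * f y) ->
  forall y, f (act z y) = gam z * f y.
Proof.
move=> C0 hb.
have f0 : forall y, 0 <= f y by case: pf.
have pgz : posh (fun y => C^-1 * f (act z y)).
  split; first by apply: (hm_scale (f := fun y => f (act z y))); exact: (hm_act z pf.1).
  by move=> y; apply: mulr_ge0; [rewrite invr_ge0 ltW | exact: f0].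
have le : forall y, C^-1 * f (act z y) <= f y.
  by move=> y; rewrite -(ler_pM2l C0) mulrA mulfV ?gt_eqF // mul1r.
move=> y; have := ext_min pgz le y => /= E.
have := congr1 (fun r => C * r) E; rewrite /= !mulrA mulfV ?gt_eqF // !mul1r.
by [].
Qed.

Lemma bound_of_triv k z : Triv (@lcs G k.+1) -> @lcs G k z ->
  exists C, 0 < C /\ forall y, f (act z y) <= C * f y.
Proof.
move=> ht hz; have [V hV] := hcoc.
have [C [C0 HC]] := @fin_max X V (fun v C => HK v (act z v) C)
  (fun v C C' h le => HK_mono h le) (fun v _ => HK_conn v (act z v)).
exists C; split => // y; have [h [v [vV ->]]] := hV y.
rewrite -act_mul act_commV ht; last first.
  by apply: lcs_comm; apply: subV => //; exact: lcs_sub.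
exact: (HK_act h (HC v vV)) f pf.
Qed.

Section Growth.
Variable k : nat.
Hypothesis htr2 : Triv (@lcs G k.+2).
Hypothesis hm1 : Mult (@lcs G k.+1).

Lemma gamM m g : @lcs G k.+1 m -> gam (m * g)%g = gam m * gam g.
Proof. by move=> hm; rewrite /gam act_mul hm1. Qed.

Lemma gamJM m g d : @lcs G k.+1 m -> gam (conjg m g * d)%g = gam m * gam d.
Proof.
move=> hm; rewrite conj_comm -mulgA gamM //; congr (_ * _).
by rewrite /gam act_mul htr2 //; apply: lcs_comm; exact: hm.
Qed.

Lemma gamJ m g : @lcs G k.+1 m -> gam (conjg m g) = gam m.
Proof. by move=> hm; have := gamJM g 1%g hm; rewrite mulg1 gam1 mulr1. Qed.

Lemma gam_commXr a e n : @lcs G k a -> gam (commg a (e ^+ n)%g) = gam (commg a e) ^+ n.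
Proof.
move=> ha; elim: n => [|n IH]; first by rewrite expg0 commg1 gam1 expr0.
rewrite expgS commMr gamM; last exact: lcs_comm.
by rewrite IH gamJ ?exprSr //; exact: lcs_comm.
Qed.

Lemma gam_commXl a e n : @lcs G k a -> gam (commg (a ^+ n)%g e) = gam (commg a e) ^+ n.
Proof.
move=> ha; elim: n => [|n IH]; first by rewrite expg0 comm1g gam1 expr0.
rewrite expgS commMl gamJM; last exact: lcs_comm.
by rewrite IH exprS.
Qed.

Lemma gam_commXX a e n : @lcs G k a ->
  gam (commg (a ^+ n)%g (e ^+ n)%g) = gam (commg a e) ^+ (n * n).
Proof.
move=> ha; rewrite gam_commXr; last by apply: subX => //; exact: lcs_sub.
by rewrite gam_commXl // -exprM.
Qed.

Lemma right_HK (s : G) : exists C, 0 < C /\ forall h n,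
  f (act (h * s ^+ n)%g x0) <= C ^+ n * f (act h x0) /\
  f (act h x0) <= C ^+ n * f (act (h * s ^+ n)%g x0).
Proof.
have [C1 [C10 h1]] := HK_conn x0 (act s x0).
have [C2 [C20 h2]] := HK_conn (act s x0) x0.
have C0 : 0 < C1 + C2 by exact: addr_gt0.
exists (C1 + C2); split => //.
have e1 : forall h', f (act (h' * s)%g x0) <= (C1 + C2) * f (act h' x0).
  move=> h'; rewrite act_mul; apply: (HK_act h' (HK_mono h1 _)) pf.
  by rewrite lerDl ltW.
have e2 : forall h', f (act h' x0) <= (C1 + C2) * f (act (h' * s)%g x0).
  move=> h'; rewrite act_mul; apply: (HK_act h' (HK_mono h2 _)) pf.
  by rewrite lerDr ltW.
move=> h; elim=> [|n [IH1 IH2]]; first by rewrite expg0 mulg1 expr0 mul1r.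
rewrite expgSr mulgA exprSr; split.
- apply: (le_trans (e1 _)); rewrite [_ ^+ n * _]mulrC -mulrA ler_wpM2l //.
  exact: ltW.
- apply: (le_trans IH2); rewrite -mulrA; apply: ler_wpM2l; [by rewrite exprn_ge0 // ltW | exact: e2].
Qed.

Lemma word_bound (a e : G) : exists K, 0 < K /\ forall n,
  gam (commg (a ^+ n)%g (e ^+ n)%g) <= K ^+ n /\
  1 <= K ^+ n * gam (commg (a ^+ n)%g (e ^+ n)%g).
Proof.
have [Ca [Ca0 ha]] := right_HK (a^-1)%g.
have [Cb [Cb0 hb]] := right_HK (e^-1)%g.
have [Cc [Cc0 hc]] := right_HK a.
have [Cd [Cd0 hd]] := right_HK e.
exists (Ca * Cb * Cc * Cd); split; first by rewrite !mulr_gt0.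
move=> n.
have -> : commg (a ^+ n)%g (e ^+ n)%g =
   ((((1 * (a^-1) ^+ n) * (e^-1) ^+ n) * a ^+ n) * e ^+ n)%g.
  by rewrite /commg /conjg !expVgn mul1g !mulgA.
rewrite /gam.
set w1 := (1 * (a^-1) ^+ n)%g.
set w2 := (w1 * (e^-1) ^+ n)%g.
set w3 := (w2 * a ^+ n)%g.
have [u1 l1] := ha 1%g n; rewrite -/w1 act1 f1 in u1 l1.
have [u2 l2] := hb w1 n; rewrite -/w2 in u2 l2.
have [u3 l3] := hc w2 n; rewrite -/w3 in u3 l3.
have [u4 l4] := hd w3 n.
have p1 : 0 <= f (act w1 x0) by case: pf.
have p2 : 0 <= f (act w2 x0) by case: pf.
have p3 : 0 <= f (act w3 x0) by case: pf.
have p4 : 0 <= f (act (w3 * e ^+ n)%g x0) by case: pf.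
have qa : 0 <= Ca ^+ n by rewrite exprn_ge0 ?ltW.
have qb : 0 <= Cb ^+ n by rewrite exprn_ge0 ?ltW.
have qc : 0 <= Cc ^+ n by rewrite exprn_ge0 ?ltW.
have qd : 0 <= Cd ^+ n by rewrite exprn_ge0 ?ltW.
rewrite !exprMn; split.
- apply: (le_trans u4).
  have s3 : f (act w3 x0) <= Cc ^+ n * (Cb ^+ n * (Ca ^+ n * 1)).
    apply: (le_trans u3); rewrite ler_wpM2l //.
    apply: (le_trans u2); rewrite ler_wpM2l //.
  have -> : Ca ^+ n * Cb ^+ n * Cc ^+ n * Cd ^+ n =
            Cd ^+ n * (Cc ^+ n * (Cb ^+ n * (Ca ^+ n * 1))) by ring.
  by rewrite ler_wpM2l.
- have s1 : 1 <= Ca ^+ n * (Cb ^+ n * (Cc ^+ n * f (act w3 x0))).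
    apply: (le_trans l1); rewrite ler_wpM2l //.
    apply: (le_trans l2); rewrite ler_wpM2l //.
  apply: (le_trans s1).
  have -> : Ca ^+ n * Cb ^+ n * Cc ^+ n * Cd ^+ n * f (act (w3 * e ^+ n)%g x0) =
            Ca ^+ n * (Cb ^+ n * (Cc ^+ n * (Cd ^+ n * f (act (w3 * e ^+ n)%g x0)))) by ring.
  by rewrite !ler_wpM2l.
Qed.

Lemma gam_comm1 a e : @lcs G k a -> gam (commg a e) = 1.
Proof.
move=> ha; have rho0 : 0 < gam (commg a e) by exact: fpos.
have [K [K0 hK]] := word_bound a e.
have hK2 n : gam (commg a e) ^+ (n * n) <= K ^+ n /\
             1 <= K ^+ n * gam (commg a e) ^+ (n * n).
  by rewrite -gam_commXX //; exact: hK.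
case: (ltgtP (gam (commg a e)) 1) => // h.
- exfalso; apply: (@growth_contra _ ((gam (commg a e))^-1) K).
    by rewrite invf_gt1.
  move=> n; have [_ h2] := hK2 n.
  rewrite exprVn -[X in X <= _]mul1r ler_pdivrMr ?exprn_gt0 //.
- by exfalso; apply: (@growth_contra _ (gam (commg a e)) K) => // n; case: (hK2 n).
Qed.
End Growth.

Lemma triv_step k : Triv (@lcs G k.+2) -> Mult (@lcs G k.+1) -> Triv (@lcs G k.+1).
Proof.
move=> h2 h1.
have sT : is_subgroup [set z : G | forall y, f (act z y) = f y].
  split; [|split].
  - by move=> y; rewrite act1.
  - by move=> u v hu hv y /=; rewrite act_mul hu hv.
  - move=> u hu y /=; rewrite -[in LHS](hu (act (u^-1)%g y)).
    by rewrite -act_mul mulgV act1.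
move=> z hz; apply: (gen_min sT _ hz).
move=> x [a [e [ha ->]]] y /=.
rewrite h1; last exact: lcs_comm.
by rewrite (gam_comm1 h2 h1 e ha) mul1r.
Qed.

Lemma Q_step k : Triv (@lcs G k.+2) -> Mult (@lcs G k.+1) ->
  Triv (@lcs G k.+1) /\ Mult (@lcs G k).
Proof.
move=> h2 h1; have ht := triv_step h2 h1; split => // z hz.
have [C [C0 hC]] := bound_of_triv ht hz.
exact: mult_of_bound C0 hC.
Qed.

Lemma Q_base n : @lcs G n = [set 1%g] -> Triv (@lcs G n.+1) /\ Mult (@lcs G n).
Proof.
move=> hn; split.
- have s1 : is_subgroup [set 1%g : G].
    split; [|split] => //.
    + by move=> u v -> ->; rewrite mulg1.
    + by move=> u ->; rewrite invg1.
  move=> z hz y; have -> : z = 1%g.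
    apply: (gen_min s1 _ hz) => x [a [e [ha ->]]].
    by have ha2 : @lcs G n a := ha; rewrite hn in ha2; rewrite ha2 comm1g.
  by rewrite act1.
- move=> z; rewrite hn => -> y; by rewrite act1 gam1 mul1r.
Qed.

Lemma Q_all n : @lcs G n = [set 1%g] -> forall j, (j <= n)%N ->
  Triv (@lcs G (n - j).+1) /\ Mult (@lcs G (n - j)).
Proof.
move=> hn; elim => [|j IH] hj; first by rewrite subn0; exact: Q_base.
have [h1 h2] := IH (ltnW hj).
have e : (n - j = (n - j.+1).+1)%N by lia.
rewrite e in h1 h2.
exact: Q_step.
Qed.

Lemma ext_multiplicative : nilpotent_group G -> Defs.multiplicative act f.
Proof.
move=> [n hn]; have [_ hM] := Q_all hn (leqnn n).
rewrite subnn in hM.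
exists gam; split; first by move=> g; exact: fpos.
split.
- by move=> g h; rewrite /gam act_mul (hM g I).
- by move=> g; apply: funext => x; rewrite /Tg (hM _ I).
Qed.

End ExtMult.


Lemma argmax (T : eqType) (V : seq T) (F : T -> R) v0 : v0 \in V ->
  exists2 v, v \in V & forall w, w \in V -> F w <= F v.
Proof.
elim: V v0 => [|a V IH] v0 //; rewrite in_cons => /orP [/eqP e | hv].
- case: (pselect (exists2 v, v \in V & forall w, w \in V -> F w <= F v)).
  + move=> [v vV hv]; case: (lerP (F a) (F v)) => hav.
    * exists v; first by rewrite in_cons vV orbT.
      by move=> w; rewrite in_cons => /orP [/eqP -> // | /hv].
    * exists a; first exact: mem_head.
      move=> w; rewrite in_cons => /orP [/eqP -> // | /hv h2].
      exact: le_trans h2 (ltW hav).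
  + move=> nV; exists a; first exact: mem_head.
    move=> w; rewrite in_cons => /orP [/eqP -> // | wV].
    by exfalso; apply: nV; exact: (IH w wV).
- have [v vV hv'] := IH v0 hv; case: (lerP (F a) (F v)) => hav.
  + exists v; first by rewrite in_cons vV orbT.
    by move=> w; rewrite in_cons => /orP [/eqP -> // | /hv'].
  + exists a; first exact: mem_head.
    move=> w; rewrite in_cons => /orP [/eqP -> // | /hv' h2].
    exact: le_trans h2 (ltW hav).
Qed.

Section MultExt.
Variables (x0 : X) (f g h : X -> R) (t : R) (gamma : G -> R).
Hypothesis pf : posh f.
Hypothesis f1 : f x0 = 1.
Hypothesis hgam : forall z y, f (act z y) = gamma z * f y.
Hypothesis gpos : forall z, 0 < gamma z.
Hypothesis pg : posh g.
Hypothesis g1 : g x0 = 1.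
Hypothesis ph : posh h.
Hypothesis t01 : 0 < t < 1.
Hypothesis hfe : forall y, f y = t * g y + (1 - t) * h y.

Lemma fposM y : 0 < f y. Proof. exact: posh_pos pf f1 y. Qed.

Definition u y := g y / f y.

Lemma tpos : 0 < t. Proof. by case/andP: t01. Qed.

Lemma u_ge0 y : 0 <= u y.
Proof. by rewrite /u divr_ge0 //; [case: pg => _ | exact: ltW (fposM y)]. Qed.

Lemma u_le y : u y <= t^-1.
Proof.
have h0 : 0 <= h y by case: ph => _.
have t1 : 0 <= 1 - t by case/andP: t01 => _ ?; lra.
have tg : t * g y <= f y by rewrite hfe lerDl mulr_ge0.
rewrite /u ler_pdivrMr ?fposM //.
by rewrite -(ler_pM2l tpos) mulrA mulfV ?gt_eqF ?tpos // mul1r.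
Qed.

Lemma gu y : g y = u y * f y.
Proof. by rewrite /u divfK // gt_eqF // fposM. Qed.

Definition Inv (S : set G) := forall z, S z -> forall y, u (act z y) = u y.

Section Step.
Variables (k : nat) (z : G).
Hypothesis hI : Inv (@lcs G k.+1).
Hypothesis hz : @lcs G k z.

Definition w y := u (act z y) - u y.

Lemma w_le y : w y <= t^-1.
Proof. have := u_le (act z y); have := u_ge0 y; rewrite /w; lra. Qed.

Lemma W_hm : hm (fun y => w y * f y).
Proof.
have E : (fun y => w y * f y) = (fun y => (gamma z)^-1 * g (act z y) - g y).
  apply: funext => y; rewrite /w /u hgam.
  have := fposM y; have := gpos z => h1 h2.
  by field; rewrite ?gt_eqF.
rewrite E; apply: hm_sub; last by case: pg.
apply: (hm_scale (f := fun y => g (act z y))); exact: hm_act pg.1.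
Qed.

Lemma u_comm h' y : u (act z (act h' y)) = u (act h' (act z y)).
Proof.
rewrite -act_mul act_commV hI //; apply: lcs_comm; apply: subV => //.
exact: lcs_sub.
Qed.

Lemma telesc h' v N : \sum_(0 <= j < N) w (act h' (act (z ^+ j)%g v)) =
  u (act h' (act (z ^+ N)%g v)) - u (act h' (act (z ^+ 0)%g v)).
Proof.
apply: (@telescope_sumr_eq _ 0%N N (fun j => u (act h' (act (z ^+ j)%g v)))) => // j _.
by rewrite /w u_comm -(act_mul z) -expgS.
Qed.

Lemma w_le0 y : w y <= 0.
Proof.
rewrite leNgt; apply/negP => wy.
have hs : has_sup (range w).
  split; first by exists (w y); exists y.
  by exists t^-1 => _ [y' _ <-]; exact: w_le.
set m := sup (range w).
have wm : forall y, w y <= m by move=> y'; have := sup_upper_bound hs; apply; exists y'.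
have m0 : 0 < m := lt_le_trans wy (wm y).
pose psi := fun y => m * f y - w y * f y.
have ppsi : posh psi.
  split.
    apply: (hm_sub (f := fun y => m * f y)); last exact: W_hm.
    by apply: hm_scale; case: pf.
  move=> y'; rewrite /psi -mulrBl mulr_ge0 // ?subr_ge0 ?wm //.
  exact: ltW (fposM y').
have [V hV] := hcoc.
pose N := (Num.truncn (2 / (t * m))).+1.
have hN : 2 / (t * m) < N%:R by exact: truncnS_gt.
have mono : forall a b : X, forall K K', 0 <= K -> K <= K' -> m - w b <= K * (m - w a) ->
   m - w b <= K' * (m - w a).
  move=> a b0 K K' K0 KK H; apply: le_trans H _; rewrite ler_wpM2r //.
  by rewrite subr_ge0 wm.
have [K [K0 HK]] : exists K, 0 < K /\ forall v, v \in V -> forall j, (j < N)%N ->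
    forall h', m - w (act h' (act (z ^+ j)%g v)) <= K * (m - w (act h' v)).
  have hv : forall v, v \in V -> exists K, 0 < K /\ (0 <= K /\ forall j, (j < N)%N ->
      forall h', m - w (act h' (act (z ^+ j)%g v)) <= K * (m - w (act h' v))).
    move=> v _.
    have hj : forall j, j \in iota 0 N -> exists K, 0 < K /\ (0 <= K /\
        forall h', m - w (act h' (act (z ^+ j)%g v)) <= K * (m - w (act h' v))).
      move=> j _.
      have [C [C0 hC]] := HK_conn v (act (z ^+ j)%g v).
      have fj := fposM (act (z ^+ j)%g v); have fv := fposM v.
      have Kp : 0 < C * f v / f (act (z ^+ j)%g v) by rewrite !mulr_gt0 ?invr_gt0.
      exists (C * f v / f (act (z ^+ j)%g v)); split => //; split; first exact: ltW.
      move=> h'; have := HK_act h' hC ppsi; rewrite /psi !(hgam h').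
      have gh := gpos h'.
      move=> H; rewrite -(ler_pM2r (mulr_gt0 gh fj)).
      have -> : C * f v / f (act (z ^+ j)%g v) * (m - w (act h' v)) * (gamma h' * f (act (z ^+ j)%g v))
              = C * (m * (gamma h' * f v) - w (act h' v) * (gamma h' * f v)).
        by field; rewrite gt_eqF.
      have -> : (m - w (act h' (act (z ^+ j)%g v))) * (gamma h' * f (act (z ^+ j)%g v)) =
          m * (gamma h' * f (act (z ^+ j)%g v)) - w (act h' (act (z ^+ j)%g v)) * (gamma h' * f (act (z ^+ j)%g v)).
        by ring.
      exact: H.
    have [K [K0 HK]] := fin_max (V := iota 0 N) (P := fun j K => 0 <= K /\
       forall h', m - w (act h' (act (z ^+ j)%g v)) <= K * (m - w (act h' v)))
      (fun j K K' '(conj K0 H) KK => conj (le_trans K0 KK) (fun h' => mono _ _ _ _ K0 KK (H h'))) hj.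
    exists K; split => //; split; first exact: ltW.
    by move=> j jN; case: (HK j _) => //; rewrite mem_iota.
  have [K [K0 HK']] := fin_max (V := V) (P := fun v K => 0 <= K /\ forall j, (j < N)%N ->
    forall h', m - w (act h' (act (z ^+ j)%g v)) <= K * (m - w (act h' v)))
    (fun v K K' '(conj K0 H) KK => conj (le_trans K0 KK)
        (fun j jN h' => mono _ _ _ _ K0 KK (H j jN h'))) hv.
  by exists K; split => // v vV; exact: (HK' v vV).2.
have eps0 : 0 < m / (2 * K) by rewrite divr_gt0 // mulr_gt0.
have [_ [y2 _ <-] hy2] := sup_adherent eps0 hs.
have [h' [v [vV ey2]]] := hV y2; rewrite ey2 in hy2.
have hy3 : m - m / (2 * K) < w (act h' v) := hy2.
have each : forall j, (0 <= j < N)%N -> m / 2 <= w (act h' (act (z ^+ j)%g v)).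
  move=> j /andP [_ jN]; have h1 := HK v vV j jN h'.
  have h2 : K * (m - w (act h' v)) <= K * (m / (2 * K)).
    by rewrite ler_wpM2l ?ltW //; lra.
  have h3 : K * (m / (2 * K)) = m / 2 by field; rewrite gt_eqF.
  lra.
have := ler_sum_nat each; rewrite sumr_const_nat subn0 telesc.
have := u_le (act h' (act (z ^+ N)%g v)); have := u_ge0 (act h' (act (z ^+ 0)%g v)).
have h4 : t^-1 < m / 2 * N%:R.
  have h5 : m / 2 * (2 / (t * m)) = t^-1 by field; rewrite ?gt_eqF ?tpos.
  by rewrite -h5 ltr_pM2l // divr_gt0.
rewrite -mulr_natr; lra.
Qed.
End Step.


Lemma Inv_step k : Inv (@lcs G k.+1) -> Inv (@lcs G k).
Proof.
move=> hI z hz y; apply/eqP; rewrite eq_le; apply/andP; split.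
- by have := w_le0 hI hz y; rewrite /w subr_le0.
- have hz' : @lcs G k (z^-1)%g by apply: subV => //; exact: lcs_sub.
  have := w_le0 hI hz' (act z y); rewrite /w subr_le0 -act_mul mulVg act1.
  done.
Qed.

Lemma Inv_all n : @lcs G n = [set 1%g] -> Inv (@lcs G 0).
Proof.
move=> hn.
have base : Inv (@lcs G n) by move=> z; rewrite hn => -> y; rewrite act1.
suff H : forall j, (j <= n)%N -> Inv (@lcs G (n - j)).
  by have := H n (leqnn n); rewrite subnn.
elim => [|j IH] hj; first by rewrite subn0.
apply: Inv_step; have e : ((n - j.+1).+1 = n - j)%N by lia.
by rewrite e; apply: IH; exact: ltnW.
Qed.

Lemma mult_ext : nilpotent_group G -> g = f.
Proof.
move=> [n hn]; have hI := Inv_all hn.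
have [V hV] := hcoc.
have [g0 [v0 [v0V _]]] := hV x0.
have [vs vsV hvs] := argmax u v0V.
have ule : forall y, u y <= u vs.
  move=> y; have [g' [v [vV ->]]] := hV y.
  by rewrite (hI g' I); exact: hvs.
pose psi := fun y => u vs * f y - g y.
have ppsi : posh psi.
  split.
    apply: (hm_sub (f := fun y => u vs * f y)); last by case: pg.
    by apply: hm_scale; case: pf.
  move=> y; rewrite /psi gu -mulrBl mulr_ge0 // ?subr_ge0 ?ule //.
  exact: ltW (fposM y).
have psi0 : psi vs = 0 by rewrite /psi gu; ring.
have E : forall y, g y = u vs * f y.
  move=> y; have := zero_prop ppsi psi0 y; rewrite /psi => /eqP.
  by rewrite subr_eq0 => /eqP ->.
have ev : u vs = 1 by have := E x0; rewrite f1 g1 mulr1.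
by apply: funext => y; rewrite E ev mul1r.
Qed.

End MultExt.

End Fin.

Import Pilot.Defs.

Theorem theorem2 (R : realType) (X : countType) (b : X -> X -> R) (c : X -> R)
  (G : groupType) (act : G -> X -> X) (x0 : X) :
  is_graph b c -> locally_finite b -> graph_connected b ->
  nilpotent_group G -> is_action act -> cocompact act ->
  G_invariant act b c ->
  [set f | Kset b c x0 f /\ multiplicative act f] = extreme_points (Kset b c x0).
Proof.
move=> hg hlf hconn hnil hact hcoc hinv.
rewrite (Kset_eq hg hlf x0).
apply/seteqP; split.
- move=> f [[pf f1] [gamma [gpos [gmul gT]]]].
  have hgam : forall z y, f (act z y) = gamma z * f y.
    move=> z y; have := congr1 (fun F => F y) (gT (z^-1)%g).
    by rewrite /Tg /= invgK.
  split; first by split.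
  move=> g h t [pg g1] [ph h1] t01 hfe.
  have hfe' : forall y, f y = t * g y + (1 - t) * h y.
    by move=> y; rewrite {1}hfe.
  have eg := mult_ext hg hlf hconn hact hinv hcoc pf f1 hgam gpos pg g1 ph t01 hfe' hnil.
  rewrite eg; apply: funext => y; have := hfe' y; rewrite eg.
  have t1 : 1 - t != 0 by case/andP: t01 => _ ?; rewrite subr_eq0 eq_sym lt_eqF.
  move=> E; apply: (mulfI t1); move: E; lra.
- move=> f [[pf f1] hext]; split; first by split.
  exact: (ext_multiplicative hg hlf hconn hact hinv hcoc pf f1 hext hnil).
Qed.
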